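(* In the two-project discovery model described in the context, let $\mu_1=-\mu<0\le c\mu=\mu_2$ with $\mu>0$ and $c\in[0,1)$, and let $\sigma_1<\sigma_2$. For $i\in\{1,2\}$ and each $\mu$, let $c_i(\mu)\in[0,1]$ be the cutoff such that, for $c\in[0,1)$, discovering project $i$ is preferred to no discovery iff $c>c_i(\mu)$. Define $$c^*:=\frac{\rho\sigma_2}{\sigma_1+2\rho\sigma_2},\qquad c^{**}:=\frac{\sigma_2}{\rho\sigma_1+2\sigma_2}.$$ Then: (0) When $w_1=1/2$, the cutoffs are constant in $\mu$, with $c_2(\mu)=c^{**}>c^*=c_1(\mu)$. The value of $\mu$ divides optimal discovery (among neither, project 1, project 2) into three regions: (1) Low $\mu$: no discovery is optimal if $c<\min\{c_1(\mu),c_2(\mu)\}$, and otherwise discovering some (not specified) project is optimal. (2) High $\mu$: there is $\bar\mu$ such that for all $\mu>\bar\mu$, $c_1(\mu)<c_2(\mu)$; no discovery is optimal if $c<c_1(\mu)$, discovering project 1 is optimal if $c\in(c_1(\mu),c_2(\mu))$, and discovering some (not specified) project is optimal if $c>c_2(\mu)$. (3) Limit $\mu$: for fixed $c$, for all sufficiently large $\mu$, no discovery is optimal if $c<c^*$, discovering project 1 is optimal if $c\in(c^*,c^{**})$, and discovering project 2 is optimal if $c>c^{**}$.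
   Context: Model. There are two projects $i\in\{1,2\}$. The agent's values $v=(v_1,v_2)\in\mathbb{R}^2$ are drawn from a common prior that is bivariate normal with means $\mu_1,\mu_2$, standard deviations $\sigma_1,\sigma_2>0$ and correlation $\rho\in(0,1)$. The principal has weights $w_1,w_2\in[0,1]$ with $w_1+w_2=1$. Timing: (1) the principal chooses whether to publicly discover $v_1$, $v_2$, or neither; (2) the chosen value is publicly revealed and the agent forms a posterior by Bayes' rule; (3) knowing the revealed value, the principal proposes a subset $S\subseteq\{1,2\}$; (4) the agent approves iff $\sum_{i\in S}\mathbb{E}[v_i\mid\text{revealed information}]\ge 0$; (5) the principal receives $\sum_{i\in S}w_i$ if approved and $0$ otherwise. The principal chooses the proposal to maximize her payoff given the revealed information; a discovery rule is optimal if it maximizes the principal's ex-ante expected payoff among the three rules, and ''preferred'' means strictly higher ex-ante expected payoff. *)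

(* Defs.v *)
From HB Require Import structures.
From mathcomp Require Import all_boot all_order all_algebra.
From mathcomp Require Import all_classical all_reals all_analysis.
From mathcomp Require Import normal_distribution.

Set Implicit Arguments.
Unset Strict Implicit.
Unset Printing Implicit Defensive.

Import Order.TTheory GRing.Theory Num.Theory.

Local Open Scope ring_scope.

Section Model.
Context {R : realType}.

Inductive rule := NoDisc | Disc1 | Disc2.

(* Principal's optimal payoff at stage (3)-(5), given the agent's posterior
   means m1, m2 and the weights (w1, w2 = 1 - w1): the maximum over the four
   proposals S = {}, {1}, {2}, {1,2} of (sum_{i in S} w_i) times the indicator
   that the agent approves S (sum_{i in S} m_i >= 0). *)
Definition opt_payoff (w1 m1 m2 : R) : R :=
  Num.max (Num.max 0 (if 0 <= m1 then w1 else 0))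
          (Num.max (if 0 <= m2 then 1 - w1 else 0)
                   (if 0 <= m1 + m2 then 1 else 0)).

(* Bayes posterior mean of v_j after v_i = x is revealed, for a bivariate
   normal prior:  E[v_j | v_i = x] = mu_j + rho * s_j / s_i * (x - mu_i). *)
Definition post_mean (muj sj mui si rho x : R) : R :=
  muj + rho * sj / si * (x - mui).

(* Ex-ante expected payoff of the principal under each discovery rule;
   the revealed value v_i has marginal law N(mu_i, s_i^2) (density
   normal_pdf mu_i s_i). *)
Definition ex_ante (mu1 mu2 s1 s2 rho w1 : R) (r : rule) : \bar R :=
  match r with
  | NoDisc => (opt_payoff w1 mu1 mu2)%:E
  | Disc1 => (\int[lebesgue_measure]_(x in [set: R])
        (opt_payoff w1 x (post_mean mu2 s2 mu1 s1 rho x)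
          * normal_pdf mu1 s1 x)%:E)%E
  | Disc2 => (\int[lebesgue_measure]_(y in [set: R])
        (opt_payoff w1 (post_mean mu1 s1 mu2 s2 rho y) y
          * normal_pdf mu2 s2 y)%:E)%E
  end.

Definition optimal (mu1 mu2 s1 s2 rho w1 : R) (r : rule) : Prop :=
  forall r' : rule, (ex_ante mu1 mu2 s1 s2 rho w1 r' <= ex_ante mu1 mu2 s1 s2 rho w1 r)%E.

Definition preferred (mu1 mu2 s1 s2 rho w1 : R) (r r' : rule) : Prop :=
  (ex_ante mu1 mu2 s1 s2 rho w1 r' < ex_ante mu1 mu2 s1 s2 rho w1 r)%E.

Definition is_cutoff (s1 s2 rho w1 : R) (d : rule) (cut : R -> R) : Prop :=
  forall mu : R, 0 < mu ->
    (0 <= cut mu <= 1) /\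
    (forall c : R, 0 <= c < 1 ->
       (preferred (- mu) (c * mu) s1 s2 rho w1 d NoDisc <-> cut mu < c)).

Definition cstar (s1 s2 rho : R) : R := rho * s2 / (s1 + 2 * rho * s2).
Definition cstarstar (s1 s2 rho : R) : R := s2 / (rho * s1 + 2 * s2).

End Model.

(* Main.v *)
Require Import Defs.
From HB Require Import structures.
From mathcomp Require Import all_boot all_order all_algebra.
From mathcomp Require Import all_classical all_reals all_analysis.
From mathcomp Require Import normal_distribution.
From mathcomp Require Import measurable_realfun.
From mathcomp Require Import ring lra.
Import Order.TTheory GRing.Theory Num.Theory.
Local Open Scope ring_scope.

Local Open Scope classical_set_scope.

Section S.
Context {R : realType}.
Notation leb := (@lebesgue_measure R).


Lemma normal_probE (m s : R) (A : set R) : measurable A ->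
  normal_prob m s A = (fine (normal_prob m s A))%:E.
Proof.
move=> mA; rewrite fineK// ge0_fin_numE ?measure_ge0//.
exact: (le_lt_trans (probability_le1 (normal_prob m s) mA) (ltry _)).
Qed.

Lemma normal_prob_set1 (m s u : R) : normal_prob m s [set u] = 0%E.
Proof.
by rewrite /normal_prob integral_set1.
Qed.


Lemma refl_pre (m a b : R) :
  (fun x => 2 * m - x) @^-1` `]a, b]%classic = `[2 * m - b, 2 * m - a[%classic.
Proof.
apply/seteqP; split => x /=; rewrite !in_itv /= => /andP[h1 h2]; apply/andP; split.
all: lra.
Qed.

Lemma push_refl (m : R) (A : set R) : measurable A ->
  pushforward leb ((fun x => 2 * m - x) : _ -> measurableTypeR R) A = leb A.
Proof.
move=> mA.
apply/esym/lebesgue_measure_unique => //=.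
  by apply: measurable_funB.
move=> _ _ [[a b]] _ <-.
rewrite /pushforward refl_pre !lebesgue_measure_itv /= !lte_fin.
have -> : (2 * m - b < 2 * m - a) = (a < b) by rewrite ltrD2l ltrN2.
case: ifP => // _; rewrite -!EFinD; congr (_%:E); lra.
Qed.

Lemma normal_pdf_refl (m s x : R) : s != 0 ->
  normal_pdf m s (2 * m - x) = normal_pdf m s x.
Proof.
move=> s0; rewrite /normal_pdf (negbTE s0) /normal_fun.
have E : (2 * m - x - m) ^+ 2 = (x - m) ^+ 2.
  by rewrite -sqrrN; congr (_ ^+ 2); ring.
by rewrite E.
Qed.

End S.

Local Open Scope classical_set_scope.

Section S.
Context {R : realType}.
Notation leb := (@lebesgue_measure R).

Lemma normal_refl (m s b : R) : s != 0 ->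
  normal_prob m s `]-oo, b[%classic = normal_prob m s `]2 * m - b, +oo[%classic.
Proof.
move=> s0; rewrite /normal_prob.
pose phi : measurableTypeR R -> measurableTypeR R := fun x : R => 2 * m - x.
have mphi : measurable_fun [set: measurableTypeR R] phi by apply: measurable_funB.
have -> : `]2 * m - b, +oo[%classic = phi @^-1` `]-oo, b[%classic.
  by apply/seteqP; split => x /=; rewrite /phi !in_itv /= ?andbT => h; lra.
pose f := fun x => (normal_pdf m s x)%:E.
transitivity (\int[leb]_(x in phi @^-1` `]-oo, b[%classic) (f \o phi) x)%E; last first.
  by apply: eq_integral => x _ /=; rewrite /f /phi normal_pdf_refl.
rewrite -(ge0_integral_pushforward mphi) //; last 2 first.
- by apply/measurable_EFinP; apply: measurable_funTS; exact: measurable_normal_pdf.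
- by move=> y _; rewrite lee_fin normal_pdf_ge0.
apply: eq_measure_integral => /= A mA _.
by rewrite push_refl.
Qed.

Definition Tl (m s t : R) : R := fine (normal_prob m s `[t, +oo[%classic).

Lemma TlE (m s t : R) : normal_prob m s `[t, +oo[%classic = (Tl m s t)%:E.
Proof. by rewrite /Tl -normal_probE. Qed.

Lemma split_itv (m s t t' : R) : t <= t' ->
  normal_prob m s `[t, +oo[%classic =
  (normal_prob m s `[t, t'[%classic + normal_prob m s `[t', +oo[%classic)%E.
Proof.
move=> tt'; rewrite -measureU //.
- congr (normal_prob m s _); apply/seteqP; split => x /=; rewrite !in_itv /= ?andbT.
    move=> h; case: (ltP x t') => h'; [left|right] => //; apply/andP; split => //.
  by case=> [/andP[h1 h2]|h]; lra.
- apply/seteqP; split => x //=; rewrite !in_itv /= ?andbT => -[/andP[h1 h2] h3].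
  lra.
Qed.

Lemma Tl_refl (m s b : R) : s != 0 -> Tl m s b = 1 - Tl m s (2 * m - b).
Proof.
move=> s0.
have h1 : `[b, +oo[%classic = ~` `]-oo, b[%classic.
  apply/seteqP; split => x /=; rewrite !in_itv /= ?andbT.
    by move=> h; apply/negP; rewrite -leNgt.
  by move/negP; rewrite -leNgt.
have h2 : normal_prob m s `]2 * m - b, +oo[%classic =
          normal_prob m s `[2 * m - b, +oo[%classic.
  have -> : `[2 * m - b, +oo[%classic = [set 2 * m - b] `|` `]2 * m - b, +oo[%classic.
    apply/seteqP; split => x /=; rewrite !in_itv /= ?andbT.
      by rewrite le_eqVlt => /orP[/eqP ->|h]; [left|right].
    by case=> [->|h]; [rewrite lexx|rewrite ltW].
  rewrite measureU //.
    have H := normal_prob_set1 m s (2 * m - b).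
    by rewrite [X in (X + _)%E]H add0e.
  by apply/seteqP; split => x //=; rewrite !in_itv /= ?andbT => -[-> ]; rewrite ltxx.
rewrite /Tl h1 probability_setC //.
have H := @normal_refl m s b s0.
rewrite [X in (_ - X)%E]H h2 TlE.
by [].
Qed.

Lemma prob_itv_lb (m s t t' c : R) : t <= t' -> 0 <= c ->
  (forall x, t <= x -> x < t' -> c <= normal_pdf m s x) ->
  ((c * (t' - t))%:E <= normal_prob m s `[t, t'[%classic)%E.
Proof.
move=> tt' c0 hc.
apply: (@le_trans _ _ (\int[leb]_(x in `[t, t'[%classic) (cst c%:E) x)%E).
  rewrite integral_cst //= lebesgue_measure_itv /= lte_fin.
  case: ltP => h; first by rewrite -EFinB -EFinM.
  have -> : t' = t by apply/le_anti; rewrite tt' h.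
  by rewrite subrr mulr0 mule0.
apply: ge0_le_integral => //.
- apply/measurable_EFinP; apply: measurable_funTS; exact: measurable_normal_pdf.
- by move=> x /=; rewrite in_itv /= => /andP[h1 h2]; rewrite lee_fin hc.
Qed.


Lemma pdfE (m s x : R) : s != 0 ->
  normal_pdf m s x = normal_peak s * expR (- (x - m) ^+ 2 / (s ^+ 2 *+ 2)).
Proof. by move=> s0; rewrite /normal_pdf (negbTE s0). Qed.

Lemma exp_mono (a b s : R) : a <= b ->
  expR (- b / (s ^+ 2 *+ 2)) <= expR (- a / (s ^+ 2 *+ 2)).
Proof.
move=> ab; rewrite ler_expR !mulNr lerN2; apply: ler_wpM2r => //.
by rewrite invr_ge0 mulrn_wge0 // sqr_ge0.
Qed.

Lemma Tl_lt (m s t t' : R) : s != 0 -> t < t' -> Tl m s t' < Tl m s t.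
Proof.
move=> s0 tt'.
pose D := `|t - m| + `|t' - m|.
pose c := normal_peak s * expR (- D ^+ 2 / (s ^+ 2 *+ 2)).
have c0 : 0 < c by rewrite mulr_gt0 ?expR_gt0 ?normal_peak_gt0.
have hc : forall x, t <= x -> x < t' -> c <= normal_pdf m s x.
  move=> x h1 h2; rewrite pdfE // /c ler_pM2l ?normal_peak_gt0 //.
  apply: exp_mono.
  have n1 := ler_norm (t' - m); have n2 := ler_norm (- (t - m)).
  rewrite normrN in n2.
  have n3 : 0 <= `|t - m| := normr_ge0 _.
  have n4 : 0 <= `|t' - m| := normr_ge0 _.
  rewrite /D; nra.
have h := @prob_itv_lb m s t t' c (ltW tt') (ltW c0) hc.
have h0 := @split_itv m s t t' (ltW tt'); rewrite !TlE in h0.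
have : ((c * (t' - t))%:E + (Tl m s t')%:E <= (Tl m s t)%:E)%E.
  by rewrite h0; apply: leeD.
rewrite -EFinD lee_fin => h'.
have : 0 < c * (t' - t) by rewrite mulr_gt0 // subr_gt0.
lra.
Qed.

Lemma Tl_ub (m s t : R) : s != 0 -> m <= t ->
  Tl m s t <= expR (- (t - m) ^+ 2 / (s ^+ 2 *+ 2)).
Proof.
move=> s0 mt.
pose E := expR (- (t - m) ^+ 2 / (s ^+ 2 *+ 2)).
rewrite -lee_fin -TlE /normal_prob.
apply: (@le_trans _ _ (\int[leb]_(x in `[t, +oo[%classic) (E%:E * (normal_pdf t s x)%:E))%E).
  apply: ge0_le_integral => //.
  - by move=> x _; rewrite lee_fin normal_pdf_ge0.
  - apply/measurable_EFinP; apply: measurable_funTS; exact: measurable_normal_pdf.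
  - apply: emeasurable_funM => //; apply/measurable_EFinP; apply: measurable_funTS;
      exact: measurable_normal_pdf.
  move=> x /=; rewrite in_itv /= andbT => tx.
  rewrite -EFinM lee_fin !pdfE // mulrCA ler_pM2l ?normal_peak_gt0 // /E -expRD.
  rewrite ler_expR -!mulNr -mulrDl; apply: ler_wpM2r.
    by rewrite invr_ge0 mulrn_wge0 // sqr_ge0.
  nra.
rewrite ge0_integralZl_EFin //; last by rewrite /E expR_ge0.
rewrite -[X in (_ <= X)%E]mule1; apply: lee_wpmul2l; first by rewrite lee_fin expR_ge0.
rewrite -(integral_normal_pdf t s).
apply: ge0_subset_integral => //.
- apply/measurable_EFinP; exact: measurable_normal_pdf.
- by move=> x _; rewrite lee_fin normal_pdf_ge0.
- by move=> x _; rewrite lee_fin normal_pdf_ge0.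
- apply/measurable_EFinP; apply: measurable_funTS; exact: measurable_normal_pdf.
Qed.

Lemma Tl_lb (m s t : R) : 0 < s -> m <= t ->
  s * normal_peak s * expR (- (t + s - m) ^+ 2 / (s ^+ 2 *+ 2)) <= Tl m s t.
Proof.
move=> s0 mt.
have s0' : s != 0 by rewrite gt_eqF.
rewrite -lee_fin -TlE (@split_itv m s t (t + s)); last by lra.
apply: (@le_trans _ _ (normal_prob m s `[t, t + s[%classic)); last first.
  by rewrite leeDl // measure_ge0.
have -> : s * normal_peak s * expR (- (t + s - m) ^+ 2 / (s ^+ 2 *+ 2)) =
  normal_peak s * expR (- (t + s - m) ^+ 2 / (s ^+ 2 *+ 2)) * (t + s - t).
  by ring.
apply: prob_itv_lb; first by lra.
  by rewrite mulr_ge0 ?normal_peak_ge0 ?expR_ge0.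
move=> x h1 h2; rewrite pdfE // ler_pM2l ?normal_peak_gt0 //.
apply: exp_mono; nra.
Qed.


Lemma prob_patch (m s b : R) :
  (\int[leb]_x (((fun x => (normal_pdf m s x)%:E) \_ `[b, +oo[%classic) x))%E
  = (Tl m s b)%:E.
Proof. by rewrite -integral_mkcond -TlE. Qed.

Lemma mpatch (m s b : R) :
  measurable_fun setT ((fun x => (normal_pdf m s x)%:E) \_ `[b, +oo[%classic).
Proof.
apply/(measurable_restrictT _ _).1 => //.
apply/measurable_EFinP; apply: measurable_funTS; exact: measurable_normal_pdf.
Qed.

Lemma patch_ge0 (m s b x : R) :
  (0 <= ((fun x => (normal_pdf m s x)%:E) \_ `[b, +oo[%classic) x)%E.
Proof. by rewrite /patch; case: ifP => // _; rewrite lee_fin normal_pdf_ge0. Qed.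

Lemma int_form (m s w a b : R) (g : R -> R) : 0 <= w <= 1 ->
  (forall x, g x = (if b <= x then 1 - w else 0) + (if a <= x then w else 0)) ->
  (\int[leb]_(x in [set: R]) (g x * normal_pdf m s x)%:E)%E =
  ((1 - w) * Tl m s b + w * Tl m s a)%:E.
Proof.
move=> /andP[w0 w1] hg.
pose P b := ((fun x => (normal_pdf m s x)%:E) \_ `[b, +oo[%classic).
transitivity (\int[leb]_(x in [set: R]) ((1 - w)%:E * P b x + w%:E * P a x))%E.
  apply: eq_integral => x _; rewrite hg /P /patch.
  have Hb : (x \in `[b, +oo[%classic) = (b <= x).
    by apply/idP/idP; rewrite in_setE /= in_itv /= andbT.
  have Ha : (x \in `[a, +oo[%classic) = (a <= x).
    by apply/idP/idP; rewrite in_setE /= in_itv /= andbT.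
  rewrite Hb Ha.
  by case: ifP => _; case: ifP => _; rewrite ?mule0 ?adde0 ?add0e -?EFinM -?EFinD;
    congr (_%:E); ring.
rewrite ge0_integralD //; first last.
- by apply: emeasurable_funM => //; exact: mpatch.
- by move=> x _; rewrite mule_ge0 ?patch_ge0 // lee_fin.
- by apply: emeasurable_funM => //; exact: mpatch.
- by move=> x _; rewrite mule_ge0 ?patch_ge0 // lee_fin; lra.
rewrite !ge0_integralZl_EFin //; first last.
- by lra.
- exact: mpatch.
- by move=> x _; exact: patch_ge0.
- exact: mpatch.
- by move=> x _; exact: patch_ge0.
by rewrite !prob_patch -!EFinM -EFinD.
Qed.


Lemma Tz_ub (m s z : R) : 0 < s -> 0 <= z ->
  Tl m s (m + z * s) <= expR (- z ^+ 2 / 2).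
Proof.
move=> s0 z0; have s0' : s != 0 by rewrite gt_eqF.
apply: (le_trans (@Tl_ub m s (m + z * s) s0' _)); last first.
  rewrite (_ : - (m + z * s - m) ^+ 2 / (s ^+ 2 *+ 2) = - z ^+ 2 / 2) //.
  by field.
by rewrite lerDl mulr_ge0 // ltW.
Qed.

Lemma Tz_lb (m s z : R) : 0 < s -> 0 <= z ->
  s * normal_peak s * expR (- (z + 1) ^+ 2 / 2) <= Tl m s (m + z * s).
Proof.
move=> s0 z0; have s0' : s != 0 by rewrite gt_eqF.
apply: le_trans (@Tl_lb m s (m + z * s) s0 _); last by rewrite lerDl mulr_ge0 // ltW.
rewrite (_ : - (m + z * s + s - m) ^+ 2 / (s ^+ 2 *+ 2) = - (z + 1) ^+ 2 / 2) //.
by field.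
Qed.

Lemma key (al be C : R) : 0 <= be -> be < al -> 0 < C ->
  exists M : R, 0 <= M /\ forall mu : R, M < mu ->
    expR (- (al * mu) ^+ 2 / 2) < C * expR (- (be * mu + 1) ^+ 2 / 2).
Proof.
move=> be0 beal C0.
pose d := al ^+ 2 - be ^+ 2.
have d0 : 0 < d by rewrite /d; nra.
pose K := `|ln C| + 1.
have K1 : - (K - 1) <= ln C.
  by have := ler_norm (- ln C); rewrite normrN /K; lra.
pose M := 1 + 2 * (be + K + 1) / d.
have M1 : 1 <= M by rewrite /M lerDl divr_ge0 // ?(ltW d0) // mulr_ge0 //;
  rewrite /K; have := normr_ge0 (ln C); lra.
exists M; split; first lra.
move=> mu Mmu.
have mu1 : 1 <= mu by lra.
have h : 2 * (be + K + 1) <= d * mu.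
  have : 2 * (be + K + 1) / d < mu by move: Mmu; rewrite /M; lra.
  by rewrite ltr_pdivrMr // => hh; nra.
rewrite -[C]lnK ?posrE // -expRD ltr_expR.
have hp : 0 <= (d * mu - 2 * (be + K + 1)) * mu by rewrite mulr_ge0 //; lra.
have K0 : 0 <= K by rewrite /K; have := normr_ge0 (ln C); lra.
have hq : 0 <= (K + 1) * (mu - 1) by rewrite mulr_ge0 //; lra.
rewrite /d in hp; nra.
Qed.


Lemma dom (s1 s2 al be A B : R) : 0 < s1 -> 0 < s2 -> 0 <= be -> be < al ->
  0 < A -> 0 < B ->
  exists M : R, 0 <= M /\ forall mu m1 m2 : R, M < mu ->
    A * Tl m1 s1 (m1 + al * mu * s1) < B * Tl m2 s2 (m2 + be * mu * s2).
Proof.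
move=> s10 s20 be0 beal A0 B0.
have al0 : 0 < al by apply: le_lt_trans beal.
pose L := s2 * normal_peak s2.
have L0 : 0 < L by rewrite mulr_gt0 // normal_peak_gt0 // gt_eqF.
have [M [M0 HM]] := @key al be (B * L / A) be0 beal
  (divr_gt0 (mulr_gt0 B0 L0) A0).
exists M; split => // mu m1 m2 Mmu.
have mu0 : 0 <= mu by apply: le_trans (ltW Mmu).
have u := @Tz_ub m1 s1 (al * mu) s10 (mulr_ge0 (ltW al0) mu0).
have l := @Tz_lb m2 s2 (be * mu) s20 (mulr_ge0 be0 mu0).
have k := HM mu Mmu.
apply: (le_lt_trans (ler_wpM2l (ltW A0) u)).
apply: (lt_le_trans _ (ler_wpM2l (ltW B0) l)).
rewrite -(ltr_pM2l A0) in k.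
apply: (lt_le_trans k); rewrite le_eqVlt; apply/orP; left; apply/eqP.
rewrite /L; field; by rewrite gt_eqF.
Qed.

Lemma opt_facts (w : R) : 0 < w < 1 ->
  [/\ (0 < w) = true, (w < 1) = true, (0 < 1 - w) = true, (1 - w < 1) = true &
  [/\ (1 - w < 0) = false, (1 < w) = false, (1 < 1 - w) = false & (w < 0) = false]].
Proof.
move=> /andP[w0 w1]; split; first [apply/idP; lra | split; apply/negbTE/negP; lra].
Qed.

Lemma opt1 (w m1 m2 : R) : 0 < w < 1 -> 0 <= m1 + m2 -> opt_payoff w m1 m2 = 1.
Proof.
move=> hw h; have [f1 f2 f3 f4 [f5 f6 f7 f8]] := @opt_facts w hw.
rewrite /opt_payoff h /=.
by case: ifP => _; case: ifP => _; rewrite /Num.max /= ?ltxx ?f1 ?f2 ?f3 ?f4 ?f5 ?f6 ?f7 ?f8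
  ?ltr01 ?ltr10 /= ?ltxx ?f1 ?f2 ?f3 ?f4 ?f5 ?f6 ?f7 ?f8 ?ltr01 ?ltr10.
Qed.

Lemma opt2 (w m1 m2 : R) : 0 < w < 1 -> m1 < 0 -> m1 + m2 < 0 ->
  opt_payoff w m1 m2 = if 0 <= m2 then 1 - w else 0.
Proof.
move=> hw h1 h; have [f1 f2 f3 f4 [f5 f6 f7 f8]] := @opt_facts w hw.
rewrite /opt_payoff (_ : (0 <= m1) = false); last by apply/negbTE; rewrite -ltNge.
rewrite (_ : (0 <= m1 + m2) = false); last by apply/negbTE; rewrite -ltNge.
by case: ifP => _; rewrite /Num.max /= ?ltxx ?f1 ?f2 ?f3 ?f4 ?f5 ?f6 ?f7 ?f8
  ?ltr01 ?ltr10 /= ?ltxx ?f1 ?f2 ?f3 ?f4 ?f5 ?f6 ?f7 ?f8 ?ltr01 ?ltr10.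
Qed.



Lemma Tl_refl' (m s t : R) : s != 0 -> Tl m s (2 * m - t) = 1 - Tl m s t.
Proof.
by move=> s0; rewrite Tl_refl // (_ : 2 * m - (2 * m - t) = t) //; ring.
Qed.

Lemma g1_form (s1 s2 rho w mu c x a b : R) : 0 < s1 -> 0 < s2 -> 0 < rho < 1 ->
  0 < w < 1 -> 0 < mu -> 0 <= c < 1 ->
  a = - mu + (1 - c) / (s1 + rho * s2) * mu * s1 ->
  b = 2 * (- mu) - (- mu + c / (rho * s2) * mu * s1) ->
  opt_payoff w x (post_mean (c * mu) s2 (- mu) s1 rho x) =
  (if b <= x then 1 - w else 0) + (if a <= x then w else 0).
Proof.
move=> s10 s20 /andP[r0 r1] hw mu0 /andP[c0 c1] ha hb.
set m2 := post_mean _ _ _ _ _ _.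
have s1n : s1 != 0 by rewrite gt_eqF.
have s2n : s2 != 0 by rewrite gt_eqF.
have rn : rho != 0 by rewrite gt_eqF.
have rs2 : 0 < rho * s2 by rewrite mulr_gt0.
have srs : 0 < s1 + rho * s2 by rewrite addr_gt0.
have srsn : s1 + rho * s2 != 0 by rewrite gt_eqF.
pose k := rho * s2 / s1.
have k0 : 0 < k by rewrite divr_gt0.
have e1 : x + m2 = (1 + k) * (x - a).
  rewrite /m2 /post_mean ha /k; field.
  by rewrite ?s1n ?s2n ?rn ?srsn.
have e2 : m2 = k * (x - b).
  rewrite /m2 /post_mean hb /k; field.
  by rewrite ?s1n ?s2n ?rn ?srsn.
have ea : a = - mu * (c * s1 + rho * s2) / (s1 + rho * s2).
  by rewrite ha; field; rewrite ?s1n ?s2n ?rn ?srsn.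
have a0 : a < 0.
  rewrite ea !mulNr oppr_lt0; apply: divr_gt0 => //.
  by rewrite mulr_gt0 // ltr_pwDr // mulr_ge0 // ltW.
have ba : b <= a.
  have t1 : 0 <= c / (rho * s2) by rewrite divr_ge0 // ltW.
  have t2 : 0 <= (1 - c) / (s1 + rho * s2) by rewrite divr_ge0 // ?subr_ge0 ltW.
  have : 0 <= c / (rho * s2) * mu * s1.
    by apply: mulr_ge0; [apply: mulr_ge0 => //; exact: ltW | exact: ltW].
  have : 0 <= (1 - c) / (s1 + rho * s2) * mu * s1.
    by apply: mulr_ge0; [apply: mulr_ge0 => //; exact: ltW | exact: ltW].
  rewrite ha hb; lra.
have k10 : 0 < 1 + k by rewrite addr_gt0.
case: (leP a x) => hx.
  rewrite opt1 //; last by rewrite e1 mulr_ge0 // ?subr_ge0 // ltW.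
  by rewrite (le_trans ba hx); ring.
rewrite opt2 //; last 2 first.
- exact: lt_trans a0.
- by rewrite e1 pmulr_rlt0 // subr_lt0.
by rewrite e2 pmulr_rge0 // subr_ge0 addr0.
Qed.

Lemma g2_form (s1 s2 rho w mu c y A B : R) : 0 < s1 -> 0 < s2 -> 0 < rho < 1 ->
  0 < w < 1 -> 0 < mu -> 0 <= c < 1 ->
  A = c * mu + (1 - c) / (s2 + rho * s1) * mu * s2 ->
  B = 2 * (c * mu) - (c * mu + c / s2 * mu * s2) ->
  opt_payoff w (post_mean (- mu) s1 (c * mu) s2 rho y) y =
  (if B <= y then 1 - w else 0) + (if A <= y then w else 0).
Proof.
move=> s10 s20 /andP[r0 r1] hw mu0 /andP[c0 c1] hA hB.
set m1 := post_mean _ _ _ _ _ _.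
have s2n : s2 != 0 by rewrite gt_eqF.
have s1n : s1 != 0 by rewrite gt_eqF.
have rn : rho != 0 by rewrite gt_eqF.
have rs1 : 0 < rho * s1 by rewrite mulr_gt0.
have srs : 0 < s2 + rho * s1 by rewrite addr_gt0.
have srsn : s2 + rho * s1 != 0 by rewrite gt_eqF.
pose k := rho * s1 / s2.
have k0 : 0 < k by rewrite divr_gt0.
have e1 : m1 + y = (1 + k) * (y - A).
  rewrite /m1 /post_mean hA /k; field.
  by rewrite ?s1n ?s2n ?rn ?srsn.
have B0 : B = 0 by rewrite hB; field.
have A0 : 0 <= A.
  have t2 : 0 <= (1 - c) / (s2 + rho * s1) by rewrite divr_ge0 // ?subr_ge0 ltW.
  rewrite hA; apply: addr_ge0; first by apply: mulr_ge0 => //; exact: ltW.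
  by apply: mulr_ge0; [apply: mulr_ge0 => //; exact: ltW | exact: ltW].
have k10 : 0 < 1 + k by rewrite addr_gt0.
rewrite B0.
case: (leP A y) => hy.
  rewrite opt1 //; last by rewrite e1 mulr_ge0 // ?subr_ge0 // ltW.
  by rewrite (le_trans A0 hy); ring.
have hs : m1 + y < 0 by rewrite e1 pmulr_rlt0 // subr_lt0.
rewrite opt2 //; last first.
  case: (ltP y 0) => y0; last by lra.
  rewrite /m1 /post_mean.
  have : rho * s1 / s2 * (y - c * mu) < 0.
    by rewrite pmulr_rlt0 ?divr_gt0 // subr_lt0 (lt_le_trans y0) // mulr_ge0 // ltW.
  lra.
by rewrite addr0.
Qed.




Lemma E0_val (s1 s2 rho w mu c : R) : 0 < w < 1 -> 0 < mu -> 0 <= c < 1 ->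
  ex_ante (- mu) (c * mu) s1 s2 rho w NoDisc = (1 - w)%:E.
Proof.
move=> hw mu0 /andP[c0 c1]; rewrite /= opt2 //.
- by rewrite mulr_ge0 // ltW.
- by rewrite oppr_lt0.
- have : c * mu < mu by rewrite gtr_pMl.
  lra.
Qed.

Lemma E1_val (s1 s2 rho w mu c : R) : 0 < s1 -> 0 < s2 -> 0 < rho < 1 ->
  0 < w < 1 -> 0 < mu -> 0 <= c < 1 ->
  ex_ante (- mu) (c * mu) s1 s2 rho w Disc1 =
  ((1 - w) * (1 - Tl (- mu) s1 (- mu + c / (rho * s2) * mu * s1)) +
   w * Tl (- mu) s1 (- mu + (1 - c) / (s1 + rho * s2) * mu * s1))%:E.
Proof.
move=> s10 s20 hr hw mu0 hc /=.
rewrite (@int_form (- mu) s1 w (- mu + (1 - c) / (s1 + rho * s2) * mu * s1)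
   (2 * (- mu) - (- mu + c / (rho * s2) * mu * s1))); last first.
  by move=> x; apply: g1_form.
  by move: hw => /andP[? ?]; apply/andP; split; apply: ltW.
by rewrite Tl_refl' // gt_eqF.
Qed.

Lemma E2_val (s1 s2 rho w mu c : R) : 0 < s1 -> 0 < s2 -> 0 < rho < 1 ->
  0 < w < 1 -> 0 < mu -> 0 <= c < 1 ->
  ex_ante (- mu) (c * mu) s1 s2 rho w Disc2 =
  ((1 - w) * (1 - Tl (c * mu) s2 (c * mu + c / s2 * mu * s2)) +
   w * Tl (c * mu) s2 (c * mu + (1 - c) / (s2 + rho * s1) * mu * s2))%:E.
Proof.
move=> s10 s20 hr hw mu0 hc /=.
rewrite (@int_form (c * mu) s2 w (c * mu + (1 - c) / (s2 + rho * s1) * mu * s2)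
   (2 * (c * mu) - (c * mu + c / s2 * mu * s2))); last first.
  by move=> y; apply: g2_form.
  by move: hw => /andP[? ?]; apply/andP; split; apply: ltW.
by rewrite Tl_refl' // gt_eqF.
Qed.


Lemma Tl_ge0 (m s t : R) : 0 <= Tl m s t.
Proof. by rewrite /Tl fine_ge0 // measure_ge0. Qed.

Lemma Tl_ltE (m s x y : R) : s != 0 -> (Tl m s y < Tl m s x) = (x < y).
Proof.
move=> s0; case: (ltgtP x y) => h.
- exact: Tl_lt.
- by apply/negbTE; rewrite -leNgt ltW // Tl_lt.
- by rewrite h ltxx.
Qed.

Lemma cmp1 (s1 s2 rho c : R) : 0 < s1 -> 0 < s2 -> 0 < rho ->
  c / (rho * s2) - (1 - c) / (s1 + rho * s2) =
  (c - cstar s1 s2 rho) * ((s1 + 2 * rho * s2) / (rho * s2 * (s1 + rho * s2))).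
Proof.
move=> s10 s20 r0; rewrite /cstar; field.
by rewrite !gt_eqF // ?addr_gt0 // ?mulr_gt0.
Qed.

Lemma cmp2 (s1 s2 rho c : R) : 0 < s1 -> 0 < s2 -> 0 < rho ->
  c / s2 - (1 - c) / (s2 + rho * s1) =
  (c - cstarstar s1 s2 rho) * ((rho * s1 + 2 * s2) / (s2 * (s2 + rho * s1))).
Proof.
move=> s10 s20 r0; rewrite /cstarstar; field.
by rewrite !gt_eqF // ?addr_gt0 // ?mulr_gt0.
Qed.

Lemma cmp3 (s1 s2 rho c : R) : 0 < s1 -> 0 < s2 -> 0 < rho ->
  (1 - c) / (s1 + rho * s2) - (1 - c) / (s2 + rho * s1) =
  (1 - c) * (1 - rho) * (s2 - s1) / ((s1 + rho * s2) * (s2 + rho * s1)).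
Proof.
move=> s10 s20 r0; field.
by rewrite !gt_eqF // ?addr_gt0 // ?mulr_gt0.
Qed.

End S.

Local Open Scope classical_set_scope.

Section M.
Context {R : realType}.

Lemma al1_ge0 (s1 s2 rho c : R) : 0 < s1 -> 0 < s2 -> 0 < rho -> c < 1 ->
  0 <= (1 - c) / (s1 + rho * s2).
Proof. by move=> *; rewrite divr_ge0 // ltW // ?subr_gt0 // addr_gt0 // mulr_gt0. Qed.

Lemma al2_ge0 (s1 s2 rho c : R) : 0 < s1 -> 0 < s2 -> 0 < rho -> c < 1 ->
  0 <= (1 - c) / (s2 + rho * s1).
Proof. by move=> *; rewrite divr_ge0 // ltW // ?subr_gt0 // addr_gt0 // mulr_gt0. Qed.

Lemma be1_ge0 (s1 s2 rho c : R) : 0 < s2 -> 0 < rho -> 0 <= c ->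
  0 <= c / (rho * s2).
Proof. by move=> *; rewrite divr_ge0 // ltW // mulr_gt0. Qed.

Lemma be2_ge0 (s2 c : R) : 0 < s2 -> 0 <= c -> 0 <= c / s2.
Proof. by move=> *; rewrite divr_ge0 // ltW. Qed.

Lemma sgn1 (s1 s2 rho c : R) : 0 < s1 -> 0 < s2 -> 0 < rho ->
  (c / (rho * s2) < (1 - c) / (s1 + rho * s2) <-> c < cstar s1 s2 rho) /\
  ((1 - c) / (s1 + rho * s2) < c / (rho * s2) <-> cstar s1 s2 rho < c).
Proof.
move=> s10 s20 r0; have e := @cmp1 _ s1 s2 rho c s10 s20 r0.
have P0 : 0 < (s1 + 2 * rho * s2) / (rho * s2 * (s1 + rho * s2)).
  by rewrite divr_gt0 ?mulr_gt0 ?addr_gt0 // mulr_gt0 // mulr_gt0.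
move: e P0; set P := (s1 + 2 * rho * s2) / (rho * s2 * (s1 + rho * s2)) => e P0.
split; split => h.
- have : c / (rho * s2) - (1 - c) / (s1 + rho * s2) < 0 by lra.
  by rewrite e pmulr_llt0 // subr_lt0.
- have : (c - cstar s1 s2 rho) * P < 0 by rewrite pmulr_llt0 // subr_lt0.
  by rewrite -e; lra.
- have : 0 < c / (rho * s2) - (1 - c) / (s1 + rho * s2) by lra.
  by rewrite e pmulr_lgt0 // subr_gt0.
- have : 0 < (c - cstar s1 s2 rho) * P by rewrite pmulr_lgt0 // subr_gt0.
  by rewrite -e; lra.
Qed.

Lemma sgn2 (s1 s2 rho c : R) : 0 < s1 -> 0 < s2 -> 0 < rho ->
  (c / s2 < (1 - c) / (s2 + rho * s1) <-> c < cstarstar s1 s2 rho) /\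
  ((1 - c) / (s2 + rho * s1) < c / s2 <-> cstarstar s1 s2 rho < c).
Proof.
move=> s10 s20 r0; have e := @cmp2 _ s1 s2 rho c s10 s20 r0.
have P0 : 0 < (rho * s1 + 2 * s2) / (s2 * (s2 + rho * s1)).
  by rewrite divr_gt0 ?mulr_gt0 ?addr_gt0 // mulr_gt0.
move: e P0; set P := (rho * s1 + 2 * s2) / (s2 * (s2 + rho * s1)) => e P0.
split; split => h.
- have : c / s2 - (1 - c) / (s2 + rho * s1) < 0 by lra.
  by rewrite e pmulr_llt0 // subr_lt0.
- have : (c - cstarstar s1 s2 rho) * P < 0 by rewrite pmulr_llt0 // subr_lt0.
  by rewrite -e; lra.
- have : 0 < c / s2 - (1 - c) / (s2 + rho * s1) by lra.
  by rewrite e pmulr_lgt0 // subr_gt0.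
- have : 0 < (c - cstarstar s1 s2 rho) * P by rewrite pmulr_lgt0 // subr_gt0.
  by rewrite -e; lra.
Qed.

Lemma al_lt (s1 s2 rho c : R) : 0 < s1 -> s1 < s2 -> 0 < rho < 1 -> c < 1 ->
  (1 - c) / (s2 + rho * s1) < (1 - c) / (s1 + rho * s2).
Proof.
move=> s10 s12 /andP[r0 r1] c1.
have s20 : 0 < s2 by apply: lt_trans s12.
have e := @cmp3 _ s1 s2 rho c s10 s20 r0.
have : 0 < (1 - c) * (1 - rho) * (s2 - s1) / ((s1 + rho * s2) * (s2 + rho * s1)).
  rewrite divr_gt0 // ?mulr_gt0 // ?subr_gt0 // addr_gt0 // mulr_gt0 //.
lra.
Qed.


Definition EA (s1 s2 rho w mu c : R) r := ex_ante (- mu) (c * mu) s1 s2 rho w r.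

Lemma P1 (s1 s2 rho w c : R) : 0 < s1 -> s1 < s2 -> 0 < rho < 1 -> 0 < w < 1 ->
  0 <= c < 1 -> c < cstar s1 s2 rho ->
  exists M : R, 0 <= M /\ forall mu : R, M < mu ->
    (EA s1 s2 rho w mu c Disc1 <= EA s1 s2 rho w mu c NoDisc)%E.
Proof.
move=> s10 s12 hr hw hc h.
have s20 : 0 < s2 by apply: lt_trans s12.
move: (hr) (hw) (hc) => /andP[r0 r1] /andP[w0 w1] /andP[c0 c1].
have w1' : 0 < 1 - w by rewrite subr_gt0.
have w2 : 0 < 2 * w by rewrite mulr_gt0.
have w2' : 0 < 2 * (1 - w) by rewrite mulr_gt0.
have [M [M0 HM]] := @dom _ s1 s1 ((1 - c) / (s1 + rho * s2)) (c / (rho * s2)) w (1 - w) s10 s10 (@be1_ge0 s1 s2 rho c s20 r0 c0) ((@sgn1 s1 s2 rho c s10 s20 r0).1.2 h) w0 w1'.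
exists M; split => // mu Mmu.
have mu0 : 0 < mu by apply: le_lt_trans Mmu.
rewrite /EA E1_val // E0_val // lee_fin.
have := HM mu (- mu) (- mu) Mmu; nra.
Qed.

Lemma P2 (s1 s2 rho w c : R) : 0 < s1 -> s1 < s2 -> 0 < rho < 1 -> 0 < w < 1 ->
  0 <= c < 1 -> cstar s1 s2 rho < c ->
  exists M : R, 0 <= M /\ forall mu : R, M < mu ->
    (EA s1 s2 rho w mu c NoDisc < EA s1 s2 rho w mu c Disc1)%E.
Proof.
move=> s10 s12 hr hw hc h.
have s20 : 0 < s2 by apply: lt_trans s12.
move: (hr) (hw) (hc) => /andP[r0 r1] /andP[w0 w1] /andP[c0 c1].
have w1' : 0 < 1 - w by rewrite subr_gt0.
have w2 : 0 < 2 * w by rewrite mulr_gt0.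
have w2' : 0 < 2 * (1 - w) by rewrite mulr_gt0.
have [M [M0 HM]] := @dom _ s1 s1 (c / (rho * s2)) ((1 - c) / (s1 + rho * s2)) (1 - w) w s10 s10 (@al1_ge0 s1 s2 rho c s10 s20 r0 c1) ((@sgn1 s1 s2 rho c s10 s20 r0).2.2 h) w1' w0.
exists M; split => // mu Mmu.
have mu0 : 0 < mu by apply: le_lt_trans Mmu.
rewrite /EA E1_val // E0_val // lte_fin.
have := HM mu (- mu) (- mu) Mmu; nra.
Qed.

Lemma P3 (s1 s2 rho w c : R) : 0 < s1 -> s1 < s2 -> 0 < rho < 1 -> 0 < w < 1 ->
  0 <= c < 1 -> c < cstarstar s1 s2 rho ->
  exists M : R, 0 <= M /\ forall mu : R, M < mu ->
    (EA s1 s2 rho w mu c Disc2 <= EA s1 s2 rho w mu c NoDisc)%E.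
Proof.
move=> s10 s12 hr hw hc h.
have s20 : 0 < s2 by apply: lt_trans s12.
move: (hr) (hw) (hc) => /andP[r0 r1] /andP[w0 w1] /andP[c0 c1].
have w1' : 0 < 1 - w by rewrite subr_gt0.
have w2 : 0 < 2 * w by rewrite mulr_gt0.
have w2' : 0 < 2 * (1 - w) by rewrite mulr_gt0.
have [M [M0 HM]] := @dom _ s2 s2 ((1 - c) / (s2 + rho * s1)) (c / s2) w (1 - w) s20 s20 (@be2_ge0 s2 c s20 c0) ((@sgn2 s1 s2 rho c s10 s20 r0).1.2 h) w0 w1'.
exists M; split => // mu Mmu.
have mu0 : 0 < mu by apply: le_lt_trans Mmu.
rewrite /EA E2_val // E0_val // lee_fin.
have := HM mu (c * mu) (c * mu) Mmu; nra.
Qed.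

Lemma P4 (s1 s2 rho w c : R) : 0 < s1 -> s1 < s2 -> 0 < rho < 1 -> 0 < w < 1 ->
  0 <= c < 1 -> cstarstar s1 s2 rho < c ->
  exists M : R, 0 <= M /\ forall mu : R, M < mu ->
    (EA s1 s2 rho w mu c NoDisc < EA s1 s2 rho w mu c Disc2)%E.
Proof.
move=> s10 s12 hr hw hc h.
have s20 : 0 < s2 by apply: lt_trans s12.
move: (hr) (hw) (hc) => /andP[r0 r1] /andP[w0 w1] /andP[c0 c1].
have w1' : 0 < 1 - w by rewrite subr_gt0.
have w2 : 0 < 2 * w by rewrite mulr_gt0.
have w2' : 0 < 2 * (1 - w) by rewrite mulr_gt0.
have [M [M0 HM]] := @dom _ s2 s2 (c / s2) ((1 - c) / (s2 + rho * s1)) (1 - w) w s20 s20 (@al2_ge0 s1 s2 rho c s10 s20 r0 c1) ((@sgn2 s1 s2 rho c s10 s20 r0).2.2 h) w1' w0.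
exists M; split => // mu Mmu.
have mu0 : 0 < mu by apply: le_lt_trans Mmu.
rewrite /EA E2_val // E0_val // lte_fin.
have := HM mu (c * mu) (c * mu) Mmu; nra.
Qed.

Lemma P5 (s1 s2 rho w c : R) : 0 < s1 -> s1 < s2 -> 0 < rho < 1 -> 0 < w < 1 ->
  0 <= c < 1 -> cstarstar s1 s2 rho < c ->
  exists M : R, 0 <= M /\ forall mu : R, M < mu ->
    (EA s1 s2 rho w mu c Disc1 <= EA s1 s2 rho w mu c Disc2)%E.
Proof.
move=> s10 s12 hr hw hc h.
have s20 : 0 < s2 by apply: lt_trans s12.
move: (hr) (hw) (hc) => /andP[r0 r1] /andP[w0 w1] /andP[c0 c1].
have w1' : 0 < 1 - w by rewrite subr_gt0.
have w2 : 0 < 2 * w by rewrite mulr_gt0.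
have w2' : 0 < 2 * (1 - w) by rewrite mulr_gt0.
have [Ma [Ma0 HMa]] := @dom _ s1 s2 ((1 - c) / (s1 + rho * s2)) ((1 - c) / (s2 + rho * s1)) (2 * w) w s10 s20 (@al2_ge0 s1 s2 rho c s10 s20 r0 c1) (@al_lt s1 s2 rho c s10 s12 hr c1) w2 w0.
have [Mb [Mb0 HMb]] := @dom _ s2 s2 (c / s2) ((1 - c) / (s2 + rho * s1)) (2 * (1 - w)) w s20 s20 (@al2_ge0 s1 s2 rho c s10 s20 r0 c1) ((@sgn2 s1 s2 rho c s10 s20 r0).2.2 h) w2' w0.
pose M := Num.max Ma Mb.
have M0 : 0 <= M by rewrite le_max Ma0.
exists M; split => // mu Mmu.
have mu0 : 0 < mu by apply: le_lt_trans Mmu.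
have hMa : Ma < mu by apply: le_lt_trans Mmu; rewrite le_max lexx.
have hMb : Mb < mu by apply: le_lt_trans Mmu; rewrite le_max lexx orbT.
rewrite /EA E1_val // E2_val // lee_fin.
have := HMa mu (- mu) (c * mu) hMa; have := HMb mu (c * mu) (c * mu) hMb.
have := @Tl_ge0 _ (- mu) s1 (- mu + c / (rho * s2) * mu * s1).
have := @Tl_ge0 _ (c * mu) s2 (c * mu + c / s2 * mu * s2).
nra.
Qed.


Lemma Q1 (s1 s2 rho mu c : R) : 0 < s1 -> s1 < s2 -> 0 < rho < 1 ->
  0 < mu -> 0 <= c < 1 ->
  ((EA s1 s2 rho 2^-1 mu c NoDisc < EA s1 s2 rho 2^-1 mu c Disc1)%E <->
   cstar s1 s2 rho < c).
Proof.
move=> s10 s12 hr mu0 hc.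
have s20 : 0 < s2 by apply: lt_trans s12.
move: (hr) (hc) => /andP[r0 r1] /andP[c0 c1].
have hw : 0 < (2 : R)^-1 < 1 by apply/andP; split; [rewrite invr_gt0 | rewrite invf_lt1]; lra.
rewrite /EA E1_val // E0_val // lte_fin.
rewrite -(@sgn1 s1 s2 rho c s10 s20 r0).2.
have e : forall a b : R, (1 - 2^-1 < (1 - 2^-1) * (1 - b) + 2^-1 * a) <-> (b < a).
  by move=> a b; split => h; lra.
rewrite e Tl_ltE ?gt_eqF //.
rewrite ltrD2l ltr_pM2r // ltr_pM2r //.
Qed.

Lemma Q2 (s1 s2 rho mu c : R) : 0 < s1 -> s1 < s2 -> 0 < rho < 1 ->
  0 < mu -> 0 <= c < 1 ->
  ((EA s1 s2 rho 2^-1 mu c NoDisc < EA s1 s2 rho 2^-1 mu c Disc2)%E <->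
   cstarstar s1 s2 rho < c).
Proof.
move=> s10 s12 hr mu0 hc.
have s20 : 0 < s2 by apply: lt_trans s12.
move: (hr) (hc) => /andP[r0 r1] /andP[c0 c1].
have hw : 0 < (2 : R)^-1 < 1 by apply/andP; split; [rewrite invr_gt0 | rewrite invf_lt1]; lra.
rewrite /EA E2_val // E0_val // lte_fin.
rewrite -(@sgn2 s1 s2 rho c s10 s20 r0).2.
have e : forall a b : R, (1 - 2^-1 < (1 - 2^-1) * (1 - b) + 2^-1 * a) <-> (b < a).
  by move=> a b; split => h; lra.
rewrite e Tl_ltE ?gt_eqF //.
rewrite ltrD2l ltr_pM2r // ltr_pM2r //.
Qed.

End M.


Section L.
Context {R : realType}.
Variables (s1 s2 rho w mu c : R).
Local Notation E := (EA s1 s2 rho w mu c).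
Local Notation opt := (optimal (- mu) (c * mu) s1 s2 rho w).

Lemma opt_none : (E Disc1 <= E NoDisc)%E -> (E Disc2 <= E NoDisc)%E -> opt NoDisc.
Proof. by move=> h1 h2 []; [exact: lexx | exact: h1 | exact: h2]. Qed.

Lemma opt_1 : (E NoDisc <= E Disc1)%E -> (E Disc2 <= E Disc1)%E -> opt Disc1.
Proof. by move=> h1 h2 []; [exact: h1 | exact: lexx | exact: h2]. Qed.

Lemma opt_2 : (E NoDisc <= E Disc2)%E -> (E Disc1 <= E Disc2)%E -> opt Disc2.
Proof. by move=> h1 h2 []; [exact: h1 | exact: h2 | exact: lexx]. Qed.

Lemma opt_some : (E NoDisc < E Disc1)%E \/ (E NoDisc < E Disc2)%E ->
  opt Disc1 \/ opt Disc2.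
Proof.
move=> h; case: (leP (E Disc2) (E Disc1)) => h12.
  left; apply: opt_1 => //; case: h => h; apply: ltW => //.
  exact: lt_le_trans h12.
right; apply: opt_2; last exact: ltW.
case: h => h; apply: ltW => //; exact: lt_trans h12.
Qed.

End L.

Lemma min_lt (R : realType) (a b x : R) : Num.min a b < x -> a < x \/ b < x.
Proof. by rewrite minElt; case: ifP => _ h; [left|right]. Qed.

Lemma lt_min' (R : realType) (a b x : R) : x < Num.min a b -> x < a /\ x < b.
Proof.
rewrite minElt; case: ifP => h1 h2; split => //; first exact: lt_trans h1.
have hb : b <= a by rewrite leNgt h1.
exact: lt_le_trans h2 hb.
Qed.

Local Close Scope classical_set_scope.

Lemma nopref {R : realType} (x y : \bar R) (cut c : R) :
  ((x < y)%E <-> cut < c) -> c <= cut -> (y <= x)%E.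
Proof. by move=> h hc; rewrite leNgt; apply/negP => /h; rewrite ltNge hc. Qed.

Lemma pin {R : realType} (cut x : R) (P : R -> Prop) : 0 <= cut <= 1 -> 0 < x < 1 ->
  (forall c, 0 <= c < 1 -> (P c <-> cut < c)) ->
  (forall c, 0 <= c < 1 -> (P c <-> x < c)) -> cut = x.
Proof.
move=> /andP[c0 c1] /andP[x0 x1] h1 h2.
case: (ltgtP cut x) => // h.
- have hc : 0 <= (cut + x) / 2 < 1 by apply/andP; split; lra.
  have := (h2 _ hc).1 ((h1 _ hc).2 (_ : cut < (cut + x) / 2)).
  by move=> /(_ ltac:(lra)); lra.
- have hc : 0 <= (cut + x) / 2 < 1 by apply/andP; split; lra.
  have := (h1 _ hc).1 ((h2 _ hc).2 (_ : x < (cut + x) / 2)).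
  by move=> /(_ ltac:(lra)); lra.
Qed.

Lemma cst_facts {R : realType} (s1 s2 rho : R) : 0 < s1 -> 0 < s2 -> 0 < rho < 1 ->
  [/\ 0 < cstar s1 s2 rho, cstar s1 s2 rho < cstarstar s1 s2 rho &
      cstarstar s1 s2 rho < 1].
Proof.
move=> s10 s20 /andP[r0 r1].
have d1 : 0 < s1 + 2 * rho * s2 by rewrite addr_gt0 // !mulr_gt0.
have d2 : 0 < rho * s1 + 2 * s2 by rewrite addr_gt0 // !mulr_gt0.
split.
- by rewrite /cstar divr_gt0 // mulr_gt0.
- rewrite /cstar /cstarstar ltr_pdivrMr // mulrAC ltr_pdivlMr //.
  have : 0 < (1 - rho ^+ 2) * (s1 * s2) by rewrite mulr_gt0 ?mulr_gt0 // subr_gt0; nra.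
  nra.
- by rewrite /cstarstar ltr_pdivrMr // mul1r; nra.
Qed.

Theorem theorem2 (R : realType) (s1 s2 rho w1 : R) (cut1 cut2 : R -> R) :
  0 < s1 -> s1 < s2 -> 0 < rho < 1 -> 0 < w1 < 1 ->
  is_cutoff s1 s2 rho w1 Disc1 cut1 ->
  is_cutoff s1 s2 rho w1 Disc2 cut2 ->
  (* (0) equal weights: constant cutoffs *)
  (w1 = 2^-1 ->
     (forall mu : R, 0 < mu ->
        cut2 mu = cstarstar s1 s2 rho /\ cut1 mu = cstar s1 s2 rho) /\
     cstar s1 s2 rho < cstarstar s1 s2 rho) /\
  (* (1) low mu (the description is valid for every mu > 0) *)
  (forall mu c : R, 0 < mu -> 0 <= c < 1 ->
     (c < Num.min (cut1 mu) (cut2 mu) ->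
        optimal (- mu) (c * mu) s1 s2 rho w1 NoDisc) /\
     (Num.min (cut1 mu) (cut2 mu) < c ->
        optimal (- mu) (c * mu) s1 s2 rho w1 Disc1 \/
        optimal (- mu) (c * mu) s1 s2 rho w1 Disc2)) /\
  (* (2) high mu *)
  (exists mubar : R, forall mu : R, 0 < mu -> mubar < mu ->
     cut1 mu < cut2 mu /\
     (forall c : R, 0 <= c < 1 ->
        (c < cut1 mu -> optimal (- mu) (c * mu) s1 s2 rho w1 NoDisc) /\
        (cut1 mu < c < cut2 mu -> optimal (- mu) (c * mu) s1 s2 rho w1 Disc1) /\
        (cut2 mu < c ->
           optimal (- mu) (c * mu) s1 s2 rho w1 Disc1 \/
           optimal (- mu) (c * mu) s1 s2 rho w1 Disc2))) /\
  (* (3) limit mu *)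
  (forall c : R, 0 <= c < 1 ->
     exists M : R, forall mu : R, 0 < mu -> M < mu ->
       (c < cstar s1 s2 rho -> optimal (- mu) (c * mu) s1 s2 rho w1 NoDisc) /\
       (cstar s1 s2 rho < c < cstarstar s1 s2 rho ->
          optimal (- mu) (c * mu) s1 s2 rho w1 Disc1) /\
       (cstarstar s1 s2 rho < c -> optimal (- mu) (c * mu) s1 s2 rho w1 Disc2)).
Proof.
move=> s10 s12 hr hw H1 H2.
have s20 : 0 < s2 by apply: lt_trans s12.
have [cs0 cslt css1] := cst_facts _ _ _ s10 s20 hr.
split.
  move=> w12; split => //; move=> mu mu0.
  have [hb1 h1] := H1 mu mu0; have [hb2 h2] := H2 mu mu0.
  rewrite w12 in h1 h2.
  split.
  - apply: (@pin _ (cut2 mu) (cstarstar s1 s2 rho) _ hb2 _ h2); first by apply/andP; split; lra.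
    by move=> c hc; exact: (Q2 _ _ _ _ _ s10 s12 hr mu0 hc).
  - apply: (@pin _ (cut1 mu) (cstar s1 s2 rho) _ hb1 _ h1); first by apply/andP; split; lra.
    by move=> c hc; exact: (Q1 _ _ _ _ _ s10 s12 hr mu0 hc).
split.
  move=> mu c mu0 hc.
  have [_ h1] := H1 mu mu0; have [_ h2] := H2 mu mu0.
  split.
  - move=> /lt_min' [ha hb]; apply: opt_none.
    + exact: (@nopref _ _ _ _ _ (h1 c hc) (ltW ha)).
    + exact: (@nopref _ _ _ _ _ (h2 c hc) (ltW hb)).
  - move=> /min_lt h; apply: opt_some.
    by case: h => h; [left; exact: (h1 c hc).2 | right; exact: (h2 c hc).2].
split.
  pose ca := (cstar s1 s2 rho + cstarstar s1 s2 rho) / 2.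
  pose cb := (ca + cstarstar s1 s2 rho) / 2.
  have hca : 0 <= ca < 1 by apply/andP; split; rewrite /ca; lra.
  have hcb : 0 <= cb < 1 by apply/andP; split; rewrite /cb /ca; lra.
  have hca' : cstar s1 s2 rho < ca by rewrite /ca; lra.
  have hcb' : cb < cstarstar s1 s2 rho by rewrite /cb /ca; lra.
  have [Ma [Ma0 HMa]] := P2 _ _ _ _ _ s10 s12 hr hw hca hca'.
  have [Mb [Mb0 HMb]] := P3 _ _ _ _ _ s10 s12 hr hw hcb hcb'.
  exists (Num.max Ma Mb) => mu mu0 hmu.
  have hma : Ma < mu by apply: le_lt_trans hmu; rewrite le_max lexx.
  have hmb : Mb < mu by apply: le_lt_trans hmu; rewrite le_max lexx orbT.
  have [_ h1] := H1 mu mu0; have [_ h2] := H2 mu mu0.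
  have k1 : cut1 mu < ca := (h1 ca hca).1 (HMa mu hma).
  have k2 : cb <= cut2 mu.
    rewrite leNgt; apply/negP => h.
    have := HMb mu hmb; rewrite leNgt => /negP; apply.
    exact: (h2 cb hcb).2 h.
  have k12 : cut1 mu < cut2 mu by rewrite /cb /ca in k2; rewrite /ca in k1; lra.
  split => // c hc; have p1 := h1 c hc; have p2 := h2 c hc.
  split; [|split].
  - move=> h; apply: opt_none; first exact: (@nopref _ _ _ _ _ p1 (ltW h)).
    exact: (@nopref _ _ _ _ _ p2 (ltW (lt_trans h k12))).
  - move=> /andP[ha hb]; apply: opt_1; first exact: ltW (p1.2 ha).
    exact: le_trans (@nopref _ _ _ _ _ p2 (ltW hb)) (ltW (p1.2 ha)).
  - by move=> h; apply: opt_some; right; exact: p2.2 h.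
move=> c hc.
case: (ltP c (cstar s1 s2 rho)) => h.
  have [M1 [_ HM1]] := P1 _ _ _ _ _ s10 s12 hr hw hc h.
  have [M3 [_ HM3]] := P3 _ _ _ _ _ s10 s12 hr hw hc (lt_trans h cslt).
  exists (Num.max M1 M3) => mu mu0 hmu.
  have hm1 : M1 < mu by apply: le_lt_trans hmu; rewrite le_max lexx.
  have hm3 : M3 < mu by apply: le_lt_trans hmu; rewrite le_max lexx orbT.
  split; [|split].
  - by move=> _; apply: opt_none; [exact: HM1 | exact: HM3].
  - by move=> /andP[h' _]; move: (lt_trans h h'); rewrite ltxx.
  - by move=> h'; move: (lt_trans h (lt_trans cslt h')); rewrite ltxx.
case: (ltP c (cstarstar s1 s2 rho)) => h2.
  case: (eqVneq c (cstar s1 s2 rho)) => [ec | nec].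
    exists 0 => mu _ _; split; [|split].
    - by [].
    - by move=> /andP[h' _]; move: h'; rewrite ec ltxx.
    - by move=> h'; move: (lt_trans h2 h'); rewrite ltxx.
  have hlt : cstar s1 s2 rho < c by rewrite lt_neqAle eq_sym nec h.
  have [M2 [_ HM2]] := P2 _ _ _ _ _ s10 s12 hr hw hc hlt.
  have [M3 [_ HM3]] := P3 _ _ _ _ _ s10 s12 hr hw hc h2.
  exists (Num.max M2 M3) => mu mu0 hmu.
  have hm2 : M2 < mu by apply: le_lt_trans hmu; rewrite le_max lexx.
  have hm3 : M3 < mu by apply: le_lt_trans hmu; rewrite le_max lexx orbT.
  split; [|split].
  - by [].
  - move=> _; apply: opt_1; first exact: ltW (HM2 mu hm2).
    exact: le_trans (HM3 mu hm3) (ltW (HM2 mu hm2)).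
  - by move=> h'; move: (lt_trans h2 h'); rewrite ltxx.
case: (eqVneq c (cstarstar s1 s2 rho)) => [ec | nec].
  exists 0 => mu _ _; split; [|split].
  - by [].
  - by move=> /andP[].
  - by move=> h'; move: h'; rewrite ec ltxx.
have hlt : cstarstar s1 s2 rho < c by rewrite lt_neqAle eq_sym nec h2.
have [M4 [_ HM4]] := P4 _ _ _ _ _ s10 s12 hr hw hc hlt.
have [M5 [_ HM5]] := P5 _ _ _ _ _ s10 s12 hr hw hc hlt.
exists (Num.max M4 M5) => mu mu0 hmu.
have hm4 : M4 < mu by apply: le_lt_trans hmu; rewrite le_max lexx.
have hm5 : M5 < mu by apply: le_lt_trans hmu; rewrite le_max lexx orbT.
split; [|split].
- by [].
- by move=> /andP[].
- by move=> _; apply: opt_2; [exact: ltW (HM4 mu hm4) | exact: HM5].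
Qed.
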